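(* Let $V$ be a manifold (not necessarily Hausdorff) with a regular $C^r$-differentiable structure, $r\geq 1$. If a real-valued $C^r$ function $f$ on $V$ is of rank $1$ at a point $x\in V$, then $f$ is also of rank $1$ at every point $y\in V$ which is not separated from $x$.
   Context: A $C^r$-differentiable structure ($r$ a positive integer or $\infty$) on an $n$-dimensional (not necessarily Hausdorff) manifold $V$ is given by an atlas of charts $h_i:\mathbb{R}^n\to V$ (homeomorphisms onto open sets covering $V$) whose transition maps $h_j^{-1}h_i$ are $C^r$ homeomorphisms between open subsets of $\mathbb{R}^n$. A function $f:V\to\mathbb{R}$ (or defined on an open subset) is $C^r$ if $f h_i$ is $C^r$ for every chart $h_i$ of the atlas; it is of rank $1$ at $x$ if for a chart $h_i$ whose image contains $x$, $f h_i$ has a nonzero partial derivative at $h_i^{-1}(x)$ (independent of the chart). The structure is regular if for every $x\in V$ and every $C^r$ function $f$ defined on a neighborhood of $x$, there is a $C^r$ function $f'$ defined on all of $V$ coinciding with $f$ on a neighborhood of $x$. Two points $x,y$ are not separated if every neighborhood of $x$ meets every neighborhood of $y$. *)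

(* Defs.v *)
From HB Require Import structures.
From mathcomp Require Import all_boot all_order all_algebra.
From mathcomp Require Import all_classical all_reals all_analysis.
Set Implicit Arguments. Unset Strict Implicit. Unset Printing Implicit Defensive.
Import Order.TTheory GRing.Theory Num.Theory.
Import numFieldNormedType.Exports.
Local Open Scope classical_set_scope.
Local Open Scope ring_scope.

Inductive regularity := Fin of nat | Infty.

Section Manifold.
Variable R : realType.
Variable n : nat.
Notation E := 'rV[R]_n.

Definition ebasis (k : 'I_n) : E := delta_mx ord0 k.

Definition partial (k : 'I_n) (g : E -> R) : E -> R :=
  fun a => 'D_(ebasis k) g a.

Fixpoint Ck (m : nat) (g : E -> R) (U : set E) : Prop :=
  (forall a, U a -> {for a, continuous g}) /\
  match m with
  | O => True
  | S m' => (forall k a, U a -> derivable g a (ebasis k)) /\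
            (forall k, Ck m' (partial k g) U)
  end.

Definition Cr (r : regularity) (g : E -> R) (U : set E) : Prop :=
  match r with
  | Fin m => Ck m g U
  | Infty => forall m, Ck m g U
  end.

Definition Cr_vec (r : regularity) (t : E -> E) (U : set E) : Prop :=
  forall j : 'I_n, Cr r (fun a => t a ord0 j) U.

Variable V : topologicalType.
Variable I : Type.

(* h : I -> (R^n -> V) is an atlas of a C^r structure on V:
   each chart is a homeomorphism onto an open subset, the images cover V,
   and the transition maps h_j^{-1} h_i (defined on h_i^{-1}(h_j(R^n)))
   are C^r. *)
Definition C_r_atlas (r : regularity) (h : I -> E -> V) : Prop :=
  (forall i, continuous (h i)) /\
  (forall i, injective (h i)) /\
  (forall i (O : set E), open O -> open (h i @` O)) /\
  (forall v : V, exists i a, h i a = v) /\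
  (forall i j, exists t : E -> E,
     (forall a, (h i @^-1` range (h j)) a -> h j (t a) = h i a) /\
     Cr_vec r t (h i @^-1` range (h j))).

Definition Cr_on (r : regularity) (h : I -> E -> V) (f : V -> R) (W : set V)
  : Prop := forall i, Cr r (f \o h i) (h i @^-1` W).

Definition rank1_at (h : I -> E -> V) (f : V -> R) (x : V) : Prop :=
  exists i a k, h i a = x /\ partial k (f \o h i) a != 0.

Definition regular_structure (r : regularity) (h : I -> E -> V) : Prop :=
  forall (x : V) (W : set V) (f : V -> R),
    open W -> W x -> Cr_on r h f W ->
    exists f' : V -> R, Cr_on r h f' setT /\
      exists N : set V, nbhs x N /\ (forall z, N z -> f' z = f z).

Definition not_separated (x y : V) : Prop :=
  forall U W : set V, nbhs x U -> nbhs y W -> U `&` W !=set0.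

End Manifold.

(* Main.v *)
Require Import Defs.
From HB Require Import structures.
From mathcomp Require Import all_boot all_order all_algebra.
From mathcomp Require Import all_classical all_reals all_analysis.
From mathcomp Require Import ring lra.
Set Implicit Arguments. Unset Strict Implicit. Unset Printing Implicit Defensive.
Import Order.TTheory GRing.Theory Num.Theory.
Import numFieldNormedType.Exports.
Local Open Scope classical_set_scope.
Local Open Scope ring_scope.

Lemma convex_lt (R : realType) (th x y rho : R) : 0 <= th <= 1 -> x < rho -> y < rho ->
  (1 - th) * x + th * y < rho.
Proof.
move=> /andP[t0 t1] hx hy.
have [t1'|te] := ltP th 1.
  have h1 : (1 - th) * x < (1 - th) * rho by rewrite ltr_pM2l // subr_gt0.
  have h2 : th * y <= th * rho by rewrite ler_wpM2l // ltW.
  lra.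
have -> : th = 1 by apply/eqP; rewrite eq_le t1 te.
lra.
Qed.

Section Aux.
Variable R : realType.
Variable n : nat.
Notation E := 'rV[R]_n.

Lemma line_deriv (g : E -> R) (p v : E) (s : R) :
  derivable g (s *: v + p) v ->
  is_derive s 1 (fun u : R => g (u *: v + p)) ('D_v g (s *: v + p)).
Proof.
move=> dg.
have eqf : (fun h : R => h^-1 *: (((fun u : R => g (u *: v + p)) \o shift s) (h *: 1)
             - g (s *: v + p))) =
           (fun h : R => h^-1 *: ((g \o shift (s *: v + p)) (h *: v) - g (s *: v + p))).
  apply: funext => h /=; congr (_ *: (g _ - _)).
  by rewrite [h%:A]mulr1 scalerDl addrA.
split; rewrite /derivable /derive.
- by rewrite eqf.
- by rewrite eqf.
Qed.

Lemma KL (g : E -> R) (p v : E) (s : R) : (forall q, derivable g q v) ->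
  exists2 th : R, 0 <= th <= 1 &
    g (s *: v + p) - g p = s * 'D_v g ((th * s) *: v + p).
Proof.
move=> dg.
pose phi := fun u : R => g (u *: v + p).
pose df := fun u : R => 'D_v g (u *: v + p).
have phid : forall u : R, is_derive u (1 : R) phi (df u) by move=> u; exact: line_deriv.
have phic : forall a b : R, {within `[a, b], continuous phi}.
  move=> a b; apply: derivable_within_continuous => u _.
  by case: (phid u).
have phi0 : phi 0 = g p by rewrite /phi scale0r add0r.
have [s0|sneq] := eqVneq s 0.
  by exists 0; rewrite ?lexx ?ler01 // s0 scale0r add0r subrr mul0r.
have [slt|sgt|seq] := ltgtP s 0; last by move: sneq; rewrite seq eqxx.
- have [c cI E1] := MVT_segment (ltW slt) (fun x _ => phid x) (phic s 0).
  exists (c / s).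
    move: cI; rewrite in_itv /= => /andP[sc c0].
    have -> : c / s = (- c) / (- s) by rewrite invrN mulrNN.
    rewrite divr_ge0 ?oppr_ge0 ?(ltW slt) //= (ler_pdivrMr _ _ (_ : 0 < - s)) ?oppr_gt0 // mul1r lerN2 //.
  rewrite divfK //. move: E1; rewrite phi0 /phi /df sub0r => E1.
  by rewrite -opprB E1 mulrN opprK mulrC.
- have [c cI E1] := MVT_segment (ltW sgt) (fun x _ => phid x) (phic 0 s).
  exists (c / s).
    move: cI; rewrite in_itv /= => /andP[c0 cs].
    by rewrite divr_ge0 ?(ltW sgt) //= ler_pdivrMr // mul1r.
  by rewrite divfK // -phi0 E1 subr0 mulrC.
Qed.

Lemma ballE (b q : E) rho : ball b rho q -> forall l, `|b ord0 l - q ord0 l| < rho.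
Proof. by case=> _ H l; exact: H. Qed.

Lemma ballI (b q : E) rho : 0 < rho -> (forall l, `|b ord0 l - q ord0 l| < rho) -> ball b rho q.
Proof. by move=> r0 H; split => // i j; rewrite (ord1 i); exact: H. Qed.

Lemma ebasisE (k l : 'I_n) : ebasis R k ord0 l = (l == k)%:R.
Proof. by rewrite /ebasis mxE eqxx /= eq_sym. Qed.

Lemma boxA (F : E -> R) (b0 : E) (rho eps : R) :
  (forall l q, derivable F q (ebasis R l)) ->
  (forall q, ball b0 rho q -> forall l, `|partial l F q| <= eps) ->
  forall b b', ball b0 rho b -> ball b0 rho b' ->
  `|F b' - F b| <= \sum_(l < n) eps * `|b' ord0 l - b ord0 l|.
Proof.
move=> dF bF b b' hb hb'.
pose p (m : nat) : E := \row_q (if (q < m)%N then b' ord0 q else b ord0 q).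
have p0 : p 0%N = b by apply/rowP => q; rewrite mxE.
have pn : p n = b' by apply/rowP => q; rewrite mxE ltn_ord.
have -> : F b' - F b = \sum_(m < n) (F (p m.+1) - F (p m)).
  by rewrite -(big_mkord xpredT (fun m => F (p m.+1) - F (p m))) telescope_sumr // pn p0.
apply: (le_trans (ler_norm_sum _ _ _)); apply: ler_sum => m _.
set d := b' ord0 m - b ord0 m.
have pS : p m.+1 = d *: ebasis R m + p m.
  apply/rowP => q; rewrite !mxE eqxx /= ltnS.
  have [->|qm] := eqVneq q m.
    by rewrite leqnn ltnn /= mulr1 /d subrK.
  rewrite /= mulr0 add0r leq_eqVlt.
  by have -> : (nat_of_ord q == nat_of_ord m) = false by apply/negbTE.
rewrite pS; have [th /andP[t0 t1] ->] := KL (p m) d (dF m).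
rewrite normrM mulrC ler_wpM2r //.
apply: bF; apply: ballI; first by case: hb.
move=> q; rewrite !mxE eqxx /=.
have [->|qm] := eqVneq q m.
  rewrite ltnn mulr1 /d.
  have -> : b0 ord0 m - (th * (b' ord0 m - b ord0 m) + b ord0 m)
    = (1 - th) * (b0 ord0 m - b ord0 m) + th * (b0 ord0 m - b' ord0 m) by ring.
  apply: (le_lt_trans (ler_normD _ _)).
  rewrite !normrM (ger0_norm t0) (ger0_norm (_ : 0 <= 1 - th)) ?subr_ge0 //.
  by apply: convex_lt; [rewrite t0 t1|exact: ballE|exact: ballE].
rewrite /= mulr0 add0r.
by case: ifP => _; apply: ballE.
Qed.

Lemma Ck_cont m (g : E -> R) U : Ck m g U -> forall a, U a -> {for a, continuous g}.
Proof. by case: m => [|m] []. Qed.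

Lemma C1_of (r : regularity) (g : E -> R) (U : set E) : r <> Fin 0 -> Cr r g U ->
  (forall l a, U a -> derivable g a (ebasis R l)) /\
  (forall l a, U a -> {for a, continuous (partial l g)}).
Proof.
case: r => [[|m]|] //= _.
  by case=> _ [d c]; split => // l a Ua; exact: Ck_cont (c l) a Ua.
by move=> H; case: (H 1%N) => _ [d c]; split => // l a Ua; exact: (c l).1 a Ua.
Qed.

Lemma near_of_open (U : set E) (g1 g2 : E -> R) a : open U -> U a ->
  (forall z, U z -> g1 z = g2 z) -> \forall z \near a, g1 z = g2 z.
Proof.
move=> oU Ua e; have nU : nbhs a U by apply: open_nbhs_nbhs; split.
by apply: filterS nU => z Uz; exact: e.
Qed.

Lemma Ck_eq (m : nat) (g1 g2 : E -> R) (U : set E) : open U ->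
  (forall a, U a -> g1 a = g2 a) -> Ck m g1 U -> Ck m g2 U.
Proof.
elim: m g1 g2 => [|m IH] g1 g2 oU e.
  case=> c _; split => // a Ua.
  have N := near_of_open oU Ua e.
  apply: cvg_trans (near_eq_cvg N) _; rewrite -(e a Ua); exact: c.
case=> c [d p]; split.
  move=> a Ua; have N := near_of_open oU Ua e.
  apply: cvg_trans (near_eq_cvg N) _; rewrite -(e a Ua); exact: c.
split.
  move=> k a Ua; have N := near_of_open oU Ua e.
  exact: near_eq_derivable N (d k a Ua).
move=> k; apply: (IH (partial k g1)); [exact: oU| |exact: p k] => a Ua.
exact: near_eq_derive (near_of_open oU Ua e).
Qed.

Lemma Cr_eq (r : regularity) (g1 g2 : E -> R) (U : set E) : open U ->
  (forall a, U a -> g1 a = g2 a) -> Cr r g1 U -> Cr r g2 U.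
Proof.
case: r => [m|] /= oU e; first exact: Ck_eq.
by move=> H m; exact: Ck_eq (H m).
Qed.

Lemma ball_step (a0 a : E) (d1 d2 sg : R) (k : 'I_n) : ball a0 d1 a -> 0 < d2 ->
  `|sg| < d2 -> ball a0 (d1 + d2) (sg *: ebasis R k + a).
Proof.
move=> ba d20 sgl; have d10 : 0 < d1 by case: ba.
apply: ballI; first exact: addr_gt0.
move=> l; rewrite !mxE eqxx /=.
have -> : a0 ord0 l - (sg * (l == k)%:R + a ord0 l)
  = (a0 ord0 l - a ord0 l) - sg * (l == k)%:R by ring.
apply: (le_lt_trans (ler_normB _ _)); apply: ltrD; first exact: ballE.
by case: (l == k); rewrite /= ?mulr1 ?mulr0 ?normr0.
Qed.

End Aux.

Unset Implicit Arguments.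
Theorem lemma2 (R : realType) (n : nat) (V : topologicalType) (I : Type)
  (h : I -> 'rV[R]_n -> V) (r : regularity) :
  r <> Fin 0 ->
  C_r_atlas r h -> regular_structure r h ->
  forall f : V -> R, Cr_on r h f setT ->
  forall x y : V, rank1_at h f x -> not_separated x y -> rank1_at h f y.
Proof.
move=> hr [hc [hinj [hop [hcov htr]]]] hreg f hf x y [i [a0 [k [hx hc0]]]] hns.
apply: contrapT => Hy.
have [j [b0 hy]] := hcov y.
pose F := f \o h j.
have F0 : forall l, partial l F b0 = 0.
  move=> l; apply: contrapT => ne; apply: Hy; exists j, b0, l; split => //.
  exact/eqP.
have [dF cF] := C1_of hr (hf j).
have [dP cP] := C1_of hr (hf i).
pose ginv (v : V) : 'rV[R]_n := match pselect (exists b, h j b = v) with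
   | left e => projT1 (cid e) | right _ => 0 end.
have ginvE : forall b, ginv (h j b) = b.
  move=> b; rewrite /ginv; case: pselect => [e|ne]; last by exfalso; apply: ne; exists b.
  by case: (cid e) => b' /= hb'; exact: hinj hb'.
have oW : open (range (h j)) by exact: hop j setT openT.
have gC : forall l, Cr_on r h (fun v => ginv v ord0 l) (range (h j)).
  move=> l i'; have [t [ht tC]] := htr i' j.
  apply: (@Cr_eq _ _ _ (fun a => t a ord0 l)); last exact: tC l.
    by apply: open_comp => // z _; exact: hc i'.
  by move=> a Ha; rewrite /= -(ht a Ha) ginvE.
have : forall l : 'I_n, exists GN : (V -> R) * set V, Cr_on r h GN.1 setT /\
     nbhs y GN.2 /\ (forall z, GN.2 z -> GN.1 z = ginv z ord0 l).
  move=> l; have [G [GC [N [nN eN]]]] := hreg y _ _ oW (ex_intro2 _ _ b0 Logic.I hy) (gC l).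
  by exists (G, N).
move=> /choice [GN HGN].
pose Q l := (GN l).1 \o h i.
have dQ : forall l q, derivable (Q l) q (ebasis R k).
  by move=> l q; exact: (C1_of hr ((HGN l).1 i)).1 k q Logic.I.
have cQ : forall l, {for a0, continuous (partial k (Q l))}.
  by move=> l; exact: (C1_of hr ((HGN l).1 i)).2 k a0 Logic.I.
pose c := partial k (f \o h i) a0.
pose M := \sum_(l < n) (`|partial k (Q l) a0| + 1).
have M0 : 0 <= M by apply: sumr_ge0 => l _; exact: addr_ge0 (normr_ge0 _) ler01.
have c0 : 0 < `|c| by rewrite normr_gt0.
pose eps := `|c| / (2 * (M + 1)).
have M1 : 0 < 2 * (M + 1) by lra.
have eps0 : 0 < eps by rewrite divr_gt0.
have epsM : eps * M < `|c| / 2.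
  have e1 : eps * (M + 1) = `|c| / 2.
    by rewrite /eps; field; apply: lt0r_neq0; lra.
  move: e1; rewrite mulrDr mulr1; lra.
have c20 : 0 < `|c| / 2 by lra.
have nP : \forall a \near a0, `|c - partial k (f \o h i) a| < `|c| / 2.
  exact: (cvgr_dist_lt _ _ (cP k a0 Logic.I) _ c20).
have nQ : \forall a \near a0, forall l, `|partial k (Q l) a0 - partial k (Q l) a| < 1.
  exact: (@filter_forall _ _ (fun l a => `|partial k (Q l) a0 - partial k (Q l) a| < 1) _ _
    (fun l => cvgr_dist_lt _ _ (cQ l) _ ltr01)).
have [d d0 Hd] := (nbhs_ballP _ _).1 (filterI nP nQ).
have nF : \forall b \near b0, forall l, `|0 - partial l F b| < eps.
  have hl : forall l, \forall b \near b0, `|0 - partial l F b| < eps.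
    move=> l; rewrite -(F0 l); exact: (cvgr_dist_lt _ _ (cF l b0 Logic.I) _ eps0).
  exact: (@filter_forall _ _ (fun l b => `|0 - partial l F b| < eps) _ _ hl).
have [rho rho0 Hrho] := (nbhs_ballP _ _).1 nF.
have nO : \forall z \near y, forall l, (GN l).2 z.
  exact: (@filter_forall _ _ (fun l z => (GN l).2 z) _ _ (fun l => (HGN l).2.1)).
have [Ob [oO Oy] sO] : exists2 Ob : set V, open_nbhs y Ob & Ob `<=` [set z | forall l, (GN l).2 z].
  have : nbhs y [set z | forall l, (GN l).2 z] := nO. by rewrite topology_structure.nbhsE.
pose U := h j @` ball b0 rho `&` Ob.
have nU : nbhs y U.
  apply: open_nbhs_nbhs; split.
    apply: openI => //; exact: hop j _ (ball_open b0 rho).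
  split => //; exists b0 => //; exact: ballxx.
have d20 : 0 < d / 2 by have d0p : 0 < d := d0; lra.
have nX : nbhs x (h i @` ball a0 (d / 2)).
  apply: open_nbhs_nbhs; split; first exact: hop i _ (ball_open _ _).
  by exists a0 => //; exact: ballxx.
have [z [[a aB hza] [[b bB hzb] Oz]]] := hns _ _ nX nU.
pose Om := h i @^-1` U.
have oOm : open Om.
  apply: open_comp => [w _|]; first exact: (hc i w).
  apply: openI => //; exact: hop j _ (ball_open b0 rho).
have Oma : Om a by rewrite /Om /= hza; split => //; exists b.
have [et et0 Het] := (nbhs_ballP _ _).1 (open_nbhs_nbhs (conj oOm Oma)).
pose m := Num.min (et / 2) (d / 2).
have [m1 m2] : m <= et / 2 /\ m <= d / 2.
  by have := lexx m; rewrite {2}/m le_min => /andP[].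
have m0 : 0 < m by rewrite /m lt_min; have et0p : 0 < et := et0; apply/andP; split; lra.
pose s := m / 2.
have s0 : 0 < s by rewrite /s; lra.
pose a' := s *: ebasis R k + a.
have Oma' : Om a'.
  apply: Het; rewrite [et]splitr; apply: ball_step.
  - by apply: ballxx; lra.
  - lra.
  - rewrite gtr0_norm //; rewrite /s; lra.
move: Oma' => [[b' b'B hb'] Oa'].
have ptB : forall th : R, 0 <= th <= 1 -> ball a0 d ((th * s) *: ebasis R k + a).
  move=> th /andP[t0 t1]; rewrite [d]splitr; apply: ball_step => //.
  rewrite normrM (ger0_norm t0) gtr0_norm //.
  have : th * s <= s by rewrite ler_piMl // ltW.
  rewrite /s; lra.
have Qa : forall l, Q l a = b ord0 l.
  by move=> l; rewrite /Q /= hza ((HGN l).2.2 z (sO z Oz l)) -hzb ginvE.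
have Qa' : forall l, Q l a' = b' ord0 l.
  by move=> l; rewrite /Q /= ((HGN l).2.2 _ (sO _ Oa' l)) -hb' ginvE.
have bF : forall q, ball b0 rho q -> forall l, `|partial l F q| <= eps.
  by move=> q /Hrho H l; have := H l; rewrite sub0r normrN => /ltW.
have B1 : `|F b' - F b| <= eps * (s * M).
  apply: le_trans (boxA (fun l q => dF l q Logic.I) bF bB b'B) _.
  rewrite /M !mulr_sumr; apply: ler_sum => l _.
  rewrite ler_wpM2l ?(ltW eps0) // -Qa -Qa'.
  have [th thI ->] := KL a s (dQ l).
  rewrite normrM (gtr0_norm s0) ler_wpM2l ?(ltW s0) //.
  have Hl := (Hd _ (ptB th thI)).2 l.
  set u := partial k (Q l) a0 in Hl *.
  set w := 'D_ _ _ _ in Hl *.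
  have -> : w = u - (u - w) by ring.
  apply: le_trans (ler_normB _ _) _; apply: lerD => //; exact: ltW.
have [th thI eP] := KL a s (fun q => dP k q Logic.I).
have Hc := (Hd _ (ptB th thI)).1.
have eq1 : F b' - F b = (f \o h i) a' - (f \o h i) a by rewrite /F /= hb' hzb hza.
rewrite eq1 eP normrM (gtr0_norm s0) in B1.
set w := 'D_ _ _ _ in B1.
have Hc' : `|c - w| < `|c| / 2 := Hc.
have hw : `|c| <= `|w| + `|c - w|.
  have e : c = w + (c - w) by ring.
  by rewrite {1}e; exact: ler_normD.
have i1 : s * (`|c| / 2) < s * `|w| by rewrite ltr_pM2l //; lra.
have i2 : s * (eps * M) < s * (`|c| / 2) by rewrite ltr_pM2l.
have i3 : eps * (s * M) = s * (eps * M) by ring.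
rewrite -i3 in i2.
by have := lt_trans (lt_le_trans i1 B1) i2; rewrite ltxx.
Qed.
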